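(* Let $E$ be an infinite-dimensional real Banach space with density character $\kappa$. Then there exist $\delta>0$ and a linearly independent set $S\subseteq S_E$ (the unit sphere of $E$) with $|S|=\kappa$ such that $\|x-\lambda x'\|\ge\delta$ for all distinct $x,x'\in S$ and all $\lambda\in\mathbb R$.
   Context: The density character of a topological space is the least cardinality of a dense subset. *)

(* Defs.v *)
From HB Require Import structures.
From mathcomp Require Import all_boot all_order all_algebra.
From mathcomp Require Import all_classical all_reals all_analysis.
Set Implicit Arguments. Unset Strict Implicit. Unset Printing Implicit Defensive.
Import Order.TTheory GRing.Theory Num.Theory.
Import numFieldNormedType.Exports.
Local Open Scope classical_set_scope.
Local Open Scope ring_scope.

Definition lin_indep {R : realType} {E : normedModType R} (S : set E) : Prop :=
  forall (s : seq E), uniq s -> (forall x, x \in s -> S x) ->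
  forall c : E -> R, \sum_(x <- s) c x *: x = 0 ->
  forall x, x \in s -> c x = 0.

Definition finite_dim {R : realType} (E : normedModType R) : Prop :=
  exists s : seq E, forall x : E,
    exists c : E -> R, x = \sum_(y <- s) c y *: y.

Definition infinite_dim {R : realType} (E : normedModType R) : Prop :=
  ~ finite_dim E.

Definition unit_sphere {R : realType} {E : normedModType R} : set E :=
  [set x | `|x| = 1].

Definition density_character_set (T : topologicalType) (D : set T) : Prop :=
  dense D /\ forall D' : set T, dense D' -> (D #<= D')%card.

(* Main.v *)
Require Import Defs.
From HB Require Import structures.
From mathcomp Require Import all_boot all_order all_algebra.
From mathcomp Require Import all_classical all_reals all_analysis.
From mathcomp Require Import ring lra.
Set Implicit Arguments. Unset Strict Implicit. Unset Printing Implicit Defensive.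
Import Order.TTheory GRing.Theory Num.Theory.
Import numFieldNormedType.Exports.
Local Open Scope classical_set_scope.
Local Open Scope ring_scope.

Definition injs {T U} (A : set T) (B : set U) :=
  exists f : T -> U, (forall x, A x -> B (f x)) /\
    (forall x y, A x -> A y -> f x = f y -> x = y).

Lemma choice_on {T U} (d : T -> U) (X : set T) (R : T -> U -> Prop) :
  (forall x, X x -> exists y, R x y) -> exists f : T -> U, forall x, X x -> R x (f x).
Proof.
move=> H.
have H' : forall x, exists y, X x -> R x y.
  move=> x; have [Xx|nXx] := pselect (X x).
    by have [y Ry] := H x Xx; exists y.
  by exists (d x).
have [f Hf] := choice H'.
by exists f.
Qed.

Lemma injs_trans {T U V} (A : set T) (B : set U) (C : set V) :
  injs A B -> injs B C -> injs A C.
Proof.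
move=> [f [fAB fi]] [g [gBC gi]]; exists (g \o f); split.
  by move=> x Ax; apply: gBC; apply: fAB.
by move=> x y Ax Ay /= /gi e; apply: fi => //; apply: e; apply: fAB.
Qed.

Lemma injs_sub {T} (A B : set T) : A `<=` B -> injs A B.
Proof. by move=> AB; exists id; split. Qed.

Lemma injs_total T (X Y : set T) : injs X Y \/ injs Y X.
Proof.
pose P (H : set (T * T)) :=
  [/\ (forall p, H p -> X p.1 /\ Y p.2),
      (forall p q, H p -> H q -> p.1 = q.1 -> p.2 = q.2) &
      (forall p q, H p -> H q -> p.2 = q.2 -> p.1 = q.1)].
have [H [[HXY Hf Hi] Hmax]] : exists H, P H /\ forall B, H `<` B -> ~ P B.
  apply: Zorn_bigcup => F FP Ftot; split.
  - by move=> p [H FH Hp]; have [+ _ _] := FP H FH; apply.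
  - move=> p q [H1 F1 H1p] [H2 F2 H2q].
    have [S12|S21] := Ftot _ _ F1 F2.
      by have [_ + _] := FP H2 F2; apply => //; apply: S12.
    by have [_ + _] := FP H1 F1; apply => //; apply: S21.
  - move=> p q [H1 F1 H1p] [H2 F2 H2q].
    have [S12|S21] := Ftot _ _ F1 F2.
      by have [_ _ +] := FP H2 F2; apply => //; apply: S12.
    by have [_ _ +] := FP H1 F1; apply => //; apply: S21.
have [dom|] := pselect (forall x, X x -> exists y, H (x, y)).
  left; have [f Hf'] := choice_on id dom.
  exists f; split; first by move=> x /Hf' /HXY [].
  move=> x y Xx Xy fxy.
  by have := Hi _ _ (Hf' _ Xx) (Hf' _ Xy) fxy.
move=> /existsNP [x /not_implyP [Xx ndx]].
have [ran|] := pselect (forall y, Y y -> exists x, H (x, y)).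
  right; have [f Hf'] := choice_on id ran.
  exists f; split; first by move=> y /Hf' /HXY [].
  move=> y y' Yy Yy' fyy.
  by have := Hf _ _ (Hf' _ Yy) (Hf' _ Yy') fyy.
move=> /existsNP [y /not_implyP [Yy nry]].
exfalso; apply: (Hmax (H `|` [set (x, y)])).
  split; first by move=> p Hp; left.
  move=> /(_ (x, y)) /= hh; apply: ndx; exists y; apply: hh; by right.
split.
- by move=> p [/HXY //|->].
- move=> p q [Hp|->] [Hq|->] //=.
  + exact: Hf.
  + by move=> e; exfalso; apply: ndx; exists p.2; rewrite -e; case: p Hp {e}.
  + by move=> e; exfalso; apply: ndx; exists q.2; rewrite e; case: q Hq {e}.
- move=> p q [Hp|->] [Hq|->] //=.
  + exact: Hi.
  + by move=> e; exfalso; apply: nry; exists p.1; rewrite -e; case: p Hp {e}.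
  + by move=> e; exfalso; apply: nry; exists q.1; rewrite e; case: q Hq {e}.
Qed.

Lemma hessenberg T (A : set T) : injs [set: nat] A -> injs (A `*` A) A.
Proof.
move=> [io [ioA ioi']].
have ioi : forall m n, io m = io n -> m = n by move=> m n; apply: ioi'.
pose pk (m n : nat) := pickle (m, n).
pose G0 : set ((T*T)*T) := [set q | exists m n, q = ((io m, io n), io (pk m n))].
pose supp (G : set ((T*T)*T)) t :=
  exists p u, G (p,u) /\ [\/ t = p.1, t = p.2 | t = u].
pose P (G : set ((T*T)*T)) :=
  [/\ (forall p u, G (p,u) -> [/\ A p.1, A p.2 & A u]),
   (forall t t', supp G t -> supp G t' -> exists u, G ((t,t'),u)),
   (forall p u v, G (p,u) -> G (p,v) -> u = v),
   (forall p q u, G (p,u) -> G (q,u) -> p = q) &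
   (G = set0 \/ G0 `<=` G)].
have supp_mono G G' : G `<=` G' -> supp G `<=` supp G'.
  by move=> GG t [p [u [Gpu ht]]]; exists p, u; split=> //; apply: GG.
have P0 : P G0.
  split.
  - by move=> p u [m [n [-> ->]]]; split; apply: ioA.
  - move=> t t' [p [u [[m [n [-> ->]]] ht]]] [p' [u' [[m' [n' [-> ->]]] ht']]].
    have [a ->] : exists a, t = io a by case: ht => /= ->; eexists.
    have [b ->] : exists b, t' = io b by case: ht' => /= ->; eexists.
    by exists (io (pk a b)); exists a, b.
  - move=> p u v [m [n [-> ->]]] [m' [n' [[/ioi e1 /ioi e2] ->]]].
    by rewrite e1 e2.
  - move=> p q u [m [n [-> ->]]] [m' [n' [-> [/ioi /(pcan_inj (@pickleK _)) [-> ->]]]]].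
    by [].
  - by right.
have [G [PG Gmax]] : exists G, P G /\ forall B, G `<` B -> ~ P B.
  apply: Zorn_bigcup => F FP Ftot; split.
  - by move=> p u [H FH Hpu]; have [+ _ _ _ _] := FP H FH; apply.
  - move=> t t' [p [u [[H1 F1 H1pu] ht]]] [p' [u' [[H2 F2 H2pu] ht']]].
    have s1 : supp H1 t by exists p, u.
    have s2 : supp H2 t' by exists p', u'.
    have [S12|S21] := Ftot _ _ F1 F2.
      have [_ + _ _ _] := FP H2 F2.
      move=> /(_ t t' (supp_mono _ _ S12 _ s1) s2) [w Hw].
      by exists w; exists H2.
    have [_ + _ _ _] := FP H1 F1.
    move=> /(_ t t' s1 (supp_mono _ _ S21 _ s2)) [w Hw].
    by exists w; exists H1.
  - move=> p u v [H1 F1 H1p] [H2 F2 H2q].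
    have [S12|S21] := Ftot _ _ F1 F2.
      have [_ _ Hc _ _] := FP H2 F2; apply: (Hc p) => //; exact: S12.
    have [_ _ Hc _ _] := FP H1 F1; apply: (Hc p) => //; exact: S21.
  - move=> p q u [H1 F1 H1p] [H2 F2 H2q].
    have [S12|S21] := Ftot _ _ F1 F2.
      have [_ _ _ Hd _] := FP H2 F2; apply: (Hd p q u) => //; exact: S12.
    have [_ _ _ Hd _] := FP H1 F1; apply: (Hd p q u) => //; exact: S21.
  - have [[H [FH sub]]|nH] := pselect (exists H, F H /\ G0 `<=` H).
      by right=> q /sub Hq; exists H.
    left; apply/seteqP; split=> // q [H FH Hq].
    have [_ _ _ _ [H0|sub]] := FP H FH.
      by move: Hq; rewrite H0.
    by exfalso; apply: nH; exists H.
have [Ga Gb Gc Gd Ge] := PG.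
have G0G : G0 `<=` G.
  case: Ge => // G00.
  exfalso.
  apply: (Gmax G0 _ P0).
  rewrite G00.
  split=> //.
  move=> sub; suff: (set0 : set (T*T*T)) ((io 0, io 0), io (pk 0 0))%N by [].
  by apply: sub; exists 0%N, 0%N.
pose B := supp G.
have BA t : B t -> A t.
  by move=> [p [u [/Ga [? ? ?] [] ->]]].
have Gsupp p u : G (p,u) -> [/\ B p.1, B p.2 & B u].
  by move=> Gpu; split; exists p, u; split => //; [exact: Or31|exact: Or32|exact: Or33].
have ioB i : B (io i).
  by exists (io i, io i), (io (pk i i)); split; [apply: G0G; exists i, i|exact: Or31].
have [f fG] : exists f : T * T -> T, forall p, (B `*` B) p -> G (p, f p).
  apply: (@choice_on _ _ (fun p : T * T => p.1) (B `*` B) (fun p u => G (p, u))).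
  move=> -[x y] [/= Bx By].
  exact: Gb.
have fB x y : B x -> B y -> B (f (x, y)).
  by move=> Bx By; have [] := Gsupp _ _ (fG (x, y) (conj Bx By)).
have finj x y x' y' : B x -> B y -> B x' -> B y' -> f (x, y) = f (x', y') ->
    x = x' /\ y = y'.
  move=> Bx By Bx' By' e.
  have := Gd _ _ _ (fG (x, y) (conj Bx By)).
  by rewrite e => /(_ _ (fG (x', y') (conj Bx' By'))) [-> ->].
have notBAB : ~ injs B (A `\` B).
  move=> [g [gB gi']].
  have gi b c : B b -> B c -> g b = g c -> b = c by move=> *; apply: gi'.
  have gnB c : B c -> ~ B (g c) by move=> /gB [].
  have gA c : B c -> A (g c) by move=> /gB [].
  pose code i b c := g (f (io i, f (b, c))).
  pose key (i : nat) b c : T * T :=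
    if i == 0%N then (b, g c) else if i == 1%N then (g b, c) else (g b, g c).
  have codeB i b c : B b -> B c -> ~ B (code i b c).
    by move=> Bb Bc; apply: (gnB (f (io i, f (b, c)))); exact: (fB _ _ (ioB i) (fB _ _ Bb Bc)).
  have codeA i b c : B b -> B c -> A (code i b c).
    by move=> Bb Bc; apply: (gA (f (io i, f (b, c)))); exact: (fB _ _ (ioB i) (fB _ _ Bb Bc)).
  have keynB i b c : B b -> B c -> ~ (B (key i b c).1 /\ B (key i b c).2).
    move=> Bb Bc; rewrite /key; case: ifP => _ /=; first by move=> [_ /(gnB _ Bc)].
    by case: ifP => _ /= [/(gnB _ Bb)].
  have keyA i b c : B b -> B c -> A (key i b c).1 /\ A (key i b c).2.
    move=> Bb Bc; rewrite /key; case: ifP => _ /=; first by split; [apply: (BA)|apply: (gA)].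
    by case: ifP => _ /=; split; try apply: (gA); try apply: (BA).
  have key_inj i j b c b' c' : (i < 3)%N -> (j < 3)%N -> B b -> B c -> B b' -> B c' ->
      key i b c = key j b' c' -> [/\ i = j, b = b' & c = c'].
    move=> + + Bb Bc Bb' Bc'; rewrite /key.
    case: i => [|[|[|//]]] _; case: j => [|[|[|//]]] _ //= [].
    all: try by move=> e1 /(gi _ _ Bc Bc') e2; rewrite e1 e2.
    all: try by move=> /(gi _ _ Bb Bb') e1 e2; rewrite e1 e2.
    all: try by move=> /(gi _ _ Bb Bb') e1 /(gi _ _ Bc Bc') e2; rewrite e1 e2.
    all: try by move=> e; exfalso; move: Bb; rewrite e; apply: (gnB).
    all: try by move=> _ e; exfalso; move: Bc; rewrite e; apply: (gnB).
    all: try by move=> e; exfalso; move: Bb'; rewrite -e; apply: (gnB).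
    all: try by move=> _ e; exfalso; move: Bc'; rewrite -e; apply: (gnB).
  have code_inj i j b c b' c' : B b -> B c -> B b' -> B c' ->
      code i b c = code j b' c' -> [/\ i = j, b = b' & c = c'].
    move=> Bb Bc Bb' Bc' e.
    have {}e := gi _ _ (fB _ _ (ioB i) (fB _ _ Bb Bc)) (fB _ _ (ioB j) (fB _ _ Bb' Bc')) e.
    have [/ioi -> e2] := finj _ _ _ _ (ioB _) (fB _ _ Bb Bc) (ioB _) (fB _ _ Bb' Bc') e.
    by have [-> ->] := finj _ _ _ _ Bb Bc Bb' Bc' e2.
  pose N : set (T * T * T) := [set q | exists i b c,
     [/\ (i < 3)%N, B b, B c & q = (key i b c, code i b c)]].
  pose G' := G `|` N.
  have suppG' t : supp G' t -> B t \/ exists2 c, B c & t = g c.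
    move=> [p [u [[Gpu|[i [b [c [i3 Bb Bc [-> ->]]]]]] ht]]].
      by left; have [? ? ?] := Gsupp _ _ Gpu; case: ht => ->.
    case: ht => ->.
    - move: i3; rewrite /key; case: ifP => _ /=; first by left.
      by case: ifP => _ /= _; right; exists b.
    - move: i3; rewrite /key; case: ifP => _ /=; first by right; exists c.
      by case: ifP => _ /= _; [left|right; exists c].
    - by right; exists (f (io i, f (b, c))) => //; apply: (fB) => //; apply: (fB).
  apply: (Gmax G').
    split; first by move=> q Gq; left.
    move=> sub.
    have : G (key 0%N (io 0%N) (io 0%N), code 0%N (io 0%N) (io 0%N)).
      by apply: sub; right; exists 0%N, (io 0%N), (io 0%N); split.
    by move=> /Gsupp [_ /= /(gnB _ (ioB 0%N))].
  split.
  - move=> p u [/Ga //|[i [b [c [i3 Bb Bc [-> ->]]]]]].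
    by have [? ?] := keyA i b c Bb Bc; split=> //; apply: codeA.
  - move=> t t' /suppG' [Bt|[c Bc ->]] /suppG' [Bt'|[c' Bc' ->]].
    + by have [w Gw] := Gb _ _ Bt Bt'; exists w; left.
    + by exists (code 0 t c'); right; exists 0%N, t, c'.
    + by exists (code 1 c t'); right; exists 1%N, c, t'.
    + by exists (code 2 c c'); right; exists 2%N, c, c'.
  - move=> p u v [Gpu|[i [b [c [i3 Bb Bc [-> ->]]]]]] [Gpv|[j [b' [c' [j3 Bb' Bc' [e ->]]]]]].
    + exact: Gc Gpu Gpv.
    + by have [? ? _] := Gsupp _ _ Gpu; exfalso; apply: (keynB j b' c') => //; rewrite -e.
    + by have [? ? _] := Gsupp _ _ Gpv; exfalso; apply: (keynB i b c).
    + by have [-> -> ->] := key_inj _ _ _ _ _ _ i3 j3 Bb Bc Bb' Bc' e.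
  - move=> p q u [Gpu|[i [b [c [i3 Bb Bc [-> ->]]]]]] [Gqu|[j [b' [c' [j3 Bb' Bc' [-> e]]]]]].
    + exact: Gd Gpu Gqu.
    + by have [_ _ ?] := Gsupp _ _ Gpu; exfalso; apply: (codeB j b' c') => //; rewrite -e.
    + by have [_ _ ?] := Gsupp _ _ Gqu; exfalso; apply: (codeB i b c).
    + by have [-> -> ->] := code_inj _ _ _ _ _ _ Bb Bc Bb' Bc' e.
  - by right=> q /G0G Gq; left.
have [[h [hB hi]]|/notBAB//] := injs_total (A `\` B) B.
pose k t := if `[< B t >] then f (io 0, t) else f (io 1, h t).
have kB t : A t -> B (k t).
  rewrite /k; case: asboolP => Bt At; apply: (fB) => //; exact: hB.
have kinj x y : A x -> A y -> k x = k y -> x = y.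
  rewrite /k => Ax Ay; case: asboolP => Bx; case: asboolP => By.
  - by move/(finj _ _ _ _ (ioB _) Bx (ioB _) By) => [].
  - by move/(finj _ _ _ _ (ioB _) Bx (ioB _) (hB _ (conj Ay By))) => [/ioi].
  - by move/(finj _ _ _ _ (ioB _) (hB _ (conj Ax Bx)) (ioB _) By) => [/ioi].
  - move/(finj _ _ _ _ (ioB _) (hB _ (conj Ax Bx)) (ioB _) (hB _ (conj Ay By))) => [_].
    by apply: hi.
exists (fun p => f (k p.1, k p.2)); split.
  by move=> [x y] [/= Ax Ay]; apply: (BA); apply: (fB); apply: (kB).
move=> [x y] [x' y'] [/= Ax Ay] [/= Ax' Ay'] /finj [] //; try exact: kB.
by move=> /kinj -> // /kinj -> //.
Qed.

Fixpoint allS {T} (A : set T) (l : seq T) : Prop :=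
  if l is x :: l' then A x /\ allS A l' else True.

Lemma injs_seq T U (X : set T) (A : set U) :
  injs [set: nat] A -> injs X A -> injs [set l | allS X l] A.
Proof.
move=> hN [phi [phiA phii]].
have [h2 [h2A h2i]] := hessenberg hN.
have [io [ioA ioi]] := hN.
pose F l := foldr (fun x acc => h2 (phi x, acc)) (io 0%N) l.
have FA l : allS X l -> A (F l).
  elim: l => [|x l IH] /=; first by move=> _; apply: ioA.
  by move=> [Xx Xl]; apply: (h2A (phi x, F l)); split; [apply: phiA|apply: IH].
have Finj l l' : allS X l -> allS X l' -> size l = size l' -> F l = F l' -> l = l'.
  elim: l l' => [|x l IH] [|x' l'] //= [Xx Xl] [Xx' Xl'] [sz] e.
  have hx : (A `*` A) (phi x, F l) by split; [apply: phiA|apply: FA].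
  have hx' : (A `*` A) (phi x', F l') by split; [apply: phiA|apply: FA].
  have [e1 e2] := h2i _ _ hx hx' e.
  by rewrite (phii _ _ Xx Xx' e1) (IH l' Xl Xl' sz e2).
exists (fun l => h2 (io (size l), F l)); split.
  by move=> l Xl; apply: (h2A (io (size l), F l)); split; [apply: ioA|apply: FA].
move=> l l' Xl Xl' e.
have hx : (A `*` A) (io (size l), F l) by split; [apply: ioA|apply: FA].
have hx' : (A `*` A) (io (size l'), F l') by split; [apply: ioA|apply: FA].
have [e1 e2] := h2i _ _ hx hx' e.
by apply: Finj => //; apply: ioi.
Qed.

Lemma allS_cat T (A : set T) l1 l2 : allS A l1 -> allS A l2 -> allS A (l1 ++ l2).
Proof. by elim: l1 => [|x l IH] //= [Ax Al] Al2; split => //; apply: IH. Qed.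

Lemma allS_mono T (A B : set T) l : A `<=` B -> allS A l -> allS B l.
Proof. by move=> AB; elim: l => [|x l IH] //= [Ax Al]; split; [apply: AB|apply: IH]. Qed.

Section Span.
Variables (R : realType) (E : normedModType R).
Implicit Types (S Y : set E).

Definition spanS S : set E := [set v | exists l : seq (R * E),
  allS (fun p => S p.2) l /\ v = \sum_(p <- l) p.1 *: p.2].

Lemma span0 S : spanS S 0.
Proof. by exists [::]; rewrite big_nil. Qed.

Lemma spanD S u v : spanS S u -> spanS S v -> spanS S (u + v).
Proof.
move=> [l1 [A1 ->]] [l2 [A2 ->]]; exists (l1 ++ l2); split.
  exact: allS_cat.
by rewrite big_cat.
Qed.

Lemma spanZ S a v : spanS S v -> spanS S (a *: v).
Proof.
move=> [l [Al ->]]; exists [seq (a * p.1, p.2) | p <- l]; split.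
  by elim: l Al => [|p l IH] //= [? ?]; split => //; apply: IH.
by rewrite big_map scaler_sumr; apply: eq_bigr => p _ /=; rewrite scalerA.
Qed.

Lemma span_sub S x : S x -> spanS S x.
Proof. by move=> Sx; exists [:: (1, x)]; rewrite big_seq1 scale1r. Qed.

Lemma spanN S v : spanS S v -> spanS S (- v).
Proof. by move=> /(spanZ (-1)); rewrite scaleN1r. Qed.

Lemma spanB S u v : spanS S u -> spanS S v -> spanS S (u - v).
Proof. by move=> Su Sv; apply: spanD => //; apply: spanN. Qed.

Lemma span_mono S S' : S `<=` S' -> spanS S `<=` spanS S'.
Proof. by move=> SS v [l [Al ->]]; exists l; split => //; by apply: allS_mono Al => p; apply: SS. Qed.

Definition subsp Y := [/\ Y 0, forall u v, Y u -> Y v -> Y (u + v) &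
  forall a v, Y v -> Y (a *: v)].

Lemma span_subsp S : subsp (spanS S).
Proof. split; [exact: span0|exact: spanD|exact: spanZ]. Qed.

Lemma riesz_dist Y z (r : R) : subsp Y -> 0 < r ->
  (forall y, Y y -> r <= `|z - y|) ->
  exists x : E, `|x| = 1 /\ forall y, Y y -> 2^-1 <= `|x - y|.
Proof.
move=> [Y0 YD YZ] r0 zr.
pose V := [set `|z - y| | y in Y].
have V0 : V !=set0 by exists `|z - 0|; exists 0.
have Vlb : lbound V r by move=> _ [y Yy <-]; apply: zr.
have hinf : has_inf V by split => //; exists r.
pose d := inf V.
have rd : r <= d by apply: lb_le_inf.
have d0 : 0 < d by apply: lt_le_trans rd.
have [_ [y0 Yy0 <-] hy0] := inf_adherent d0 hinf.
pose n := `|z - y0|.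
have dn : d <= n by apply: ge_inf; [exists r|exists y0].
have n0 : 0 < n by apply: lt_le_trans dn.
exists (n^-1 *: (z - y0)); split.
  by rewrite normrZ ger0_norm ?invr_ge0 ?ltW // mulVf // gt_eqF.
move=> y Yy.
have -> : n^-1 *: (z - y0) - y = n^-1 *: (z - (y0 + n *: y)).
  by rewrite !scalerBr scalerDr scalerA mulVf ?gt_eqF // scale1r opprD addrA.
rewrite normrZ ger0_norm ?invr_ge0 ?ltW //.
have : d <= `|z - (y0 + n *: y)|.
  by apply: ge_inf; [exists r|exists (y0 + n *: y) => //; apply: YD => //; apply: YZ].
move=> h.
apply: (@lt_le_trans _ _ (n^-1 * d)); last by rewrite ler_pM2l ?invr_gt0.
rewrite mulrC ltr_pdivlMr //.
move: hy0; rewrite -/n => hy0; lra.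
Qed.

End Span.

Section Closed.
Variables (R : realType) (E : normedModType R).
Implicit Types (S Y : set E).

Definition pclosed Y := forall z, ~ Y z ->
  exists2 r : R, 0 < r & forall y, Y y -> r <= `|z - y|.

Lemma span_cons (x : E) (s : seq E) v : spanS [set` x :: s] v ->
  exists a y, spanS [set` s] y /\ v = y + a *: x.
Proof.
move=> [l [Al ->]]; elim: l Al => [|p l IH] /=.
  by move=> _; exists 0, 0; rewrite big_nil scale0r addr0; split => //; apply: span0.
rewrite big_cons => -[/= Pp /IH [a [y [Yy ->]]]].
move: Pp; rewrite in_cons => /orP [/eqP ->|ps].
  by exists (p.1 + a), y; split => //; rewrite scalerDl addrCA addrA.
exists a, (p.1 *: p.2 + y); split; last by rewrite addrA.
by apply: spanD => //; apply: spanZ; apply: span_sub.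
Qed.

Lemma span_nil (v : E) : spanS [set` ([::] : seq E)] v -> v = 0.
Proof. move=> [[|p l] [/= Al ->]]; first by rewrite big_nil. by case: Al; rewrite in_nil. Qed.

Lemma span_closed (s : seq E) : pclosed (spanS [set` s]).
Proof.
elim: s => [|x s IH].
  move=> z nz; exists `|z|.
    by rewrite normr_gt0; apply/eqP => z0; apply: nz; rewrite z0; apply: span0.
  by move=> y /span_nil ->; rewrite subr0.
pose Y := spanS [set` s].
pose Y' := spanS [set` x :: s].
have [Y0 YD YZ] := span_subsp [set` s].
have YY' : Y `<=` Y'.
  by apply: span_mono => t /= ts; rewrite in_cons ts orbT.
have Y'_of y a : Y y -> Y' (y + a *: x).
  move=> Yy; apply: spanD; first exact: YY'.
  by apply: spanZ; apply: span_sub; rewrite /= in_cons eqxx.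
move=> z nz.
have [Yx|nYx] := pselect (Y x).
  have [r r0 hr] := IH z (fun h => nz (YY' _ h)).
  exists r => // v /span_cons [a [y [Yy ->]]].
  by apply: hr; apply: YD => //; apply: YZ.
have [d d0 hd] := IH x nYx.
have nza a : ~ Y (z - a *: x).
  by move=> h; apply: nz; have := Y'_of _ a h; rewrite subrK.
pose h a := inf [set `|z - a *: x - y| | y in Y].
have hlbd a : has_lbound [set `|z - a *: x - y| | y in Y].
  by exists 0 => _ [y _ <-].
have hlb a y : Y y -> h a <= `|z - a *: x - y|.
  by move=> Yy; apply: ge_inf => //; exists y.
have hpos a : 0 < h a.
  have [r r0 hr] := IH _ (nza a).
  apply: lt_le_trans r0 _; apply: lb_le_inf; first by exists `|z - a *: x - 0|, 0.
  by move=> _ [y Yy <-]; apply: hr.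
have hlip a b : h a <= h b + `|a - b| * `|x|.
  rewrite -lerBlDr; apply: lb_le_inf; first by exists `|z - b *: x - 0|, 0.
  move=> _ [y Yy <-]; rewrite lerBlDr.
  apply: le_trans (hlb a y Yy) _.
  have -> : z - a *: x - y = (z - b *: x - y) + (b - a) *: x.
    by rewrite scalerBl !addrA [z - b *: x - y + _]addrAC subrK addrAC.
  by apply: (le_trans (ler_normD _ _)); rewrite normrZ (distrC b a).
have hcont : continuous h.
  move=> a; apply/cvgrPdist_lt => e e0.
  have xe : 0 < e / (`|x| + 1) by rewrite divr_gt0 // ltr_wpDl.
  apply/nbhs_ballP; exists (e / (`|x| + 1)) => //= t /= hat.
  rewrite ltr_pdivlMr ?ltr_wpDl // in hat.
  apply: (@le_lt_trans _ _ (`|a - t| * `|x|)).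
    have h1 := hlip a t; have h2 := hlip t a; rewrite (distrC t a) in h2.
    move: h1 h2; set k := `|a - t| * `|x| => h1 h2.
    rewrite ler_norml; apply/andP; split; lra.
  apply: le_lt_trans hat; apply: ler_wpM2l => //; lra.
pose M := (`|z| + 1) / d.
have M0 : 0 <= M by rewrite divr_ge0 // ?ltW // ltr_wpDr.
have MM : - M <= M by lra.
have [c cM hc] := EVT_min MM (@continuous_subspaceT _ _ _ h hcont).
exists (Num.min 1 (h c)); first by rewrite lt_min ltr01 hpos.
move=> v /span_cons [a [y [Yy ->]]].
have -> : z - (y + a *: x) = z - a *: x - y by rewrite opprD addrA addrAC.
have [aM|Ma] := lerP `|a| M.
  rewrite ge_min; apply/orP; right.
  apply: le_trans (hc a _) (hlb a y Yy).
  by rewrite in_itv /= -ler_norml.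
rewrite ge_min; apply/orP; left.
have a0 : a != 0 by rewrite -normr_gt0; apply: le_lt_trans Ma.
pose y' := - (a^-1 *: y).
have Yy' : Y y' by rewrite /y' -scaleN1r; apply: (YZ); apply: (YZ).
have e1 : a *: x + y = a *: (x - y').
  by rewrite /y' opprK scalerDr scalerA mulfV // scale1r.
have h1 := hd _ Yy'.
have h2 : `|a *: x + y| - `|z| <= `|z - a *: x - y|.
  have -> : z - a *: x - y = - ((a *: x + y) - z) by rewrite opprB opprD addrA.
  by rewrite normrN; apply: lerB_dist.
rewrite e1 normrZ in h2.
have h3 : `|a| * d <= `|a| * `|x - y'| by apply: ler_wpM2l.
have h4 : M * d < `|a| * d by rewrite ltr_pM2r.
have h5 : M * d = `|z| + 1 by rewrite /M divfK // gt_eqF.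
move: h2 h3 h4 h5; set A := `|a| * d; set B := `|a| * `|x - y'|; set C := M * d.
move=> h2 h3 h4 h5; lra.
Qed.
End Closed.

Lemma injs_card T (U : pointedType) (A : set T) (B : set U) :
  injs A B <-> (A #<= B)%card.
Proof.
split.
  move=> [f [fAB fi]]; apply/pcard_leP; apply/injfunPex; exists f.
    by move=> x Ax; apply: fAB.
  by move=> x y /set_mem Ax /set_mem Ay; apply: fi.
move=> /pcard_leP /injfunPex [f fAB fi]; exists f; split.
  by move=> x Ax; apply: fAB.
by move=> x y Ax Ay; apply: fi; apply/mem_set.
Qed.

Section Main.
Variables (R : realType) (E : normedModType R).
Implicit Types (S Y : set E).

Lemma span_sum_cond S (s : seq E) (P : pred E) (c : E -> R) :
  (forall y, y \in s -> P y -> S y) -> spanS S (\sum_(y <- s | P y) c y *: y).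
Proof.
elim: s => [|y s IH] hs; first by rewrite big_nil; apply: span0.
rewrite big_cons; case: ifP => Py.
  apply: spanD; first by apply: spanZ; apply: span_sub; apply: hs => //; rewrite in_cons eqxx.
  by apply: IH => z zs Pz; apply: hs => //; rewrite in_cons zs orbT.
by apply: IH => z zs Pz; apply: hs => //; rewrite in_cons zs orbT.
Qed.

Lemma span_uniq_coef (s : seq E) v : uniq s -> spanS [set` s] v ->
  exists c : E -> R, v = \sum_(y <- s) c y *: y.
Proof.
move=> us [l [Al ->]]; elim: l Al => [|p l IH] /=.
  by move=> _; exists (fun _ => 0); rewrite big_nil big1 // => y _; rewrite scale0r.
rewrite big_cons => -[ps /IH [c ->]].
exists (fun y => c y + (if y == p.2 then p.1 else 0)).
under eq_bigr => y _ do rewrite scalerDl.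
rewrite big_split /= addrC; congr (_ + _).
rewrite (bigD1_seq p.2) //= eqxx big1 ?addr0 // => y /negbTE ->.
by rewrite scale0r.
Qed.

Lemma finite_span_dim S : finite_set S -> (forall z, spanS S z) -> finite_dim E.
Proof.
move=> /finite_seqP [s ->] hz; exists (undup s) => x.
apply: span_uniq_coef; first exact: undup_uniq.
have -> : [set` undup s] = [set` s].
  by apply/seteqP; split => y /=; rewrite mem_undup.
exact: hz.
Qed.

End Main.

Section Main2.
Variables (R : realType) (E : normedModType R).
Implicit Types (S Y : set E).

Definition sepP S := forall x x', S x -> S x' -> x <> x' ->
  forall l : R, 3^-1 <= `|x - l *: x'|.
Definition goodP S := [/\ S `<=` unit_sphere, lin_indep S & sepP S].

Lemma good_ext S x : goodP S -> `|x| = 1 ->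
  (forall y, spanS S y -> 2^-1 <= `|x - y|) -> ~ S x /\ goodP (S `|` [set x]).
Proof.
move=> [Ssph Sli Ssep] x1 hx.
have nSx : ~ S x.
  by move=> /span_sub /hx; rewrite subrr normr0; lra.
split => //; split.
- by move=> y [/Ssph //|->].
- move=> s us hs c sc.
  have [xs|xns] := boolP (x \in s).
    have hS : forall y, y \in s -> y != x -> S y.
      by move=> y ys yx; case: (hs y ys) => // yx'; move: yx; rewrite yx' eqxx.
    move: sc; rewrite (bigD1_seq x) //= => sc.
    have cx0 : c x = 0.
      apply/eqP; apply/negP => /negP cx.
      have : spanS S x.
        have -> : x = - (c x)^-1 *: \sum_(i <- s | i != x) c i *: i.
          apply: (scalerI cx); rewrite scalerA mulrN mulfV // scaleN1r.
          by apply/eqP; rewrite -subr_eq0 opprK sc.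
        by apply: spanZ; apply: span_sum_cond.
      by move=> /hx; rewrite subrr normr0; lra.
    move: sc; rewrite cx0 scale0r add0r -big_filter => sc.
    have li := Sli _ (filter_uniq _ us) _ c sc.
    move=> y ys; have [->//|yx] := eqVneq y x.
    apply: li; first by move=> z; rewrite mem_filter => /andP [zx zs]; apply: hS.
    by rewrite mem_filter yx.
  apply: (Sli s us _ c sc) => y ys.
  case: (hs y ys) => // yx; move: xns; rewrite -yx ys //.
- move=> x1' x2' [S1|->] [S2|->] neq l.
  + exact: Ssep.
  +
    have N1 : 1 - `|l| <= `|x1' - l *: x|.
      by have := lerB_dist x1' (l *: x); rewrite normrZ x1 mulr1 (Ssph _ S1).
    have N2 : `|l| * 2^-1 <= `|x1' - l *: x|.
      have [->|l0] := eqVneq l 0.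
        by rewrite normr0 mul0r.
      have e : x1' - l *: x = - l *: (x - l^-1 *: x1').
        by rewrite scalerBr scalerA mulNr mulfV // scaleN1r opprK scaleNr addrC.
      rewrite e normrZ normrN ler_pM2l ?normr_gt0 //.
      by apply: hx; apply: spanZ; apply: span_sub.
    lra.
  + apply: le_trans (_ : 2^-1 <= _); first lra.
    by apply: hx; apply: spanZ; apply: span_sub.
  + by case: neq.
Qed.

Lemma chain_seq (F : set (set E)) : total_on F subset -> forall s : seq E,
  (forall y, y \in s -> (\bigcup_(X in F) X) y) ->
  exists X, (X = set0 \/ F X) /\ forall y, y \in s -> X y.
Proof.
move=> Ftot; elim => [|y s IH] hs; first by exists set0; split => //; left.
have hs' : forall z, z \in s -> (\bigcup_(X in F) X) z.
  by move=> z zs; apply: hs; rewrite in_cons zs orbT.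
have [X [X0F Xs]] := IH hs'.
have [X1 F1 X1y] : (\bigcup_(X in F) X) y by apply: hs; rewrite in_cons eqxx.
case: X0F => [X0|FX].
  exists X1; split; first by right.
  by move=> z; rewrite in_cons => /orP [/eqP -> //|/Xs]; rewrite X0.
have [X1X|XX1] := Ftot _ _ F1 FX.
  exists X; split; first by right.
  by move=> z; rewrite in_cons => /orP [/eqP -> |/Xs //]; apply: X1X.
exists X1; split; first by right.
by move=> z; rewrite in_cons => /orP [/eqP -> //|/Xs]; apply: XX1.
Qed.

Lemma good_chain (F : set (set E)) : F `<=` goodP -> total_on F subset ->
  goodP (\bigcup_(X in F) X).
Proof.
move=> FP Ftot; split.
- by move=> x [X FX Xx]; have [+ _ _] := FP X FX; apply.
- move=> s us hs c sc.
  have [X [[X0|FX] Xs]] := chain_seq Ftot hs.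
    by move=> y /Xs; rewrite X0.
  by have [_ + _] := FP X FX; apply.
- move=> x x' [X1 F1 X1x] [X2 F2 X2x'] neq l.
  have [S12|S21] := Ftot _ _ F1 F2.
    by have [_ _ +] := FP X2 F2; apply => //; apply: S12.
  by have [_ _ +] := FP X1 F1; apply => //; apply: S21.
Qed.

End Main2.

Lemma injs_ratX T (A : set T) : injs [set: nat] A -> injs [set p : rat * T | A p.2] A.
Proof.
move=> hN; have [h2 [h2A h2i]] := hessenberg hN; have [io [ioA ioi]] := hN.
exists (fun p => h2 (io (pickle p.1), p.2)); split.
  by move=> p Ap; apply: (h2A (io (pickle p.1), p.2)); split => //; apply: ioA.
move=> [q x] [q' x'] /= Ax Ax' e.
have hx : (A `*` A) (io (pickle q), x) by split => //; apply: ioA.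
have hx' : (A `*` A) (io (pickle q'), x') by split => //; apply: ioA.
have [/ioi e1 /= ->] := h2i _ _ hx hx' e.
by rewrite (pcan_inj (@pickleK _) (e1 I I)).
Qed.

Lemma arith_key (R : realType) (a b c : R) :
  a < 6^-1 -> b < 6^-1 -> c <= a + b -> 3^-1 <= c -> False.
Proof. by move=> *; lra. Qed.

Section Main3.
Variables (R : realType) (E : normedModType R).
Implicit Types (S Y : set E).

Lemma approx_rat S (Ssph : S `<=` unit_sphere) (l : seq (R * E)) :
  allS (fun p => S p.2) l ->
  forall e : R, 0 < e -> exists l' : seq (rat * E), allS (fun p => S p.2) l' /\
   `|\sum_(p <- l) p.1 *: p.2 - \sum_(p <- l') ratr p.1 *: p.2| < e.
Proof.
elim: l => [|p l IH] /=.
  by move=> _ e e0; exists [::]; rewrite !big_nil subrr normr0.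
move=> [Sp Sl] e e0.
have e2 : 0 < e / 2 by rewrite divr_gt0.
have [l' [Sl' hl']] := IH Sl _ e2.
have [q] := @rat_in_itvoo R (p.1 - e/2) (p.1 + e/2) ltac:(lra).
rewrite in_itv /= => /andP [q1 q2].
exists ((q, p.2) :: l'); split => //.
rewrite !big_cons /= opprD addrACA -scalerBl.
apply: le_lt_trans (ler_normD _ _) _.
rewrite normrZ (Ssph _ Sp) mulr1.
have : `|p.1 - ratr q| < e / 2 by rewrite ltr_norml; apply/andP; split; lra.
move: hl'; set a := `|_ - _|; set b := `|_ - _|; lra.
Qed.

End Main3.

Unset Implicit Arguments.
Set Strict Implicit.

Theorem lemma3p1 (R : realType) (E : completeNormedModType R) (D : set E) :
  infinite_dim E -> density_character_set D ->
  exists delta : R, 0 < delta /\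
    exists S : set E,
      S `<=` unit_sphere /\ lin_indep S /\ (S #= D)%card /\
      forall x x', S x -> S x' -> x <> x' ->
        forall lambda : R, delta <= `|x - lambda *: x'|.
Proof.
move=> infd [Ddense Dmin].
have [S [SG Smax]] : exists S : set E, goodP S /\ forall B, S `<` B -> ~ goodP B.
  by apply: Zorn_bigcup => F FP Ftot; apply: good_chain.
have [Ssph Sli Ssep] := SG.
have M1 : forall x : E, `|x| = 1 -> ~ (forall y, spanS S y -> 2^-1 <= `|x - y|).
  move=> x x1 hx; have [nSx Gx] := good_ext SG x1 hx.
  apply: (Smax _ _ Gx); split; first by move=> y Sy; left.
  by move=> /(_ x (or_intror erefl)).
have M2 : dense (spanS S).
  apply: contrapT => nd; have [W [[z [oO Oz]] OS0]] := denseNE nd.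
  have : nbhs z W by apply: open_nbhs_nbhs; split.
  move=> /nbhs_ballP [r /= r0 rO].
  have hr : forall y, spanS S y -> r <= `|z - y|.
    move=> y Sy; rewrite leNgt; apply/negP => zy.
    have : (W `&` spanS S) y by split => //; apply: rO; rewrite -ball_normE /=.
    by rewrite OS0.
  have [x [x1 hx]] := riesz_dist (span_subsp S) r0 hr.
  exact: M1 x1 hx.
have M3 : infinite_set S.
  move=> finS.
  have : ~ (forall z, spanS S z) by move=> h; apply: infd; exact: finite_span_dim finS h.
  move=> /existsNP [z nz].
  have [s Ss] := (finite_seqP S).1 finS.
  have [r r0 hr] : exists2 r : R, 0 < r & forall y, spanS S y -> r <= `|z - y|.
    by rewrite Ss in nz *; apply: span_closed.
  have [x [x1 hx]] := riesz_dist (span_subsp S) r0 hr.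
  exact: M1 x1 hx.
have SD : (S #<= D)%card.
  apply/injs_card.
  have hd : forall s, S s -> exists d, D d /\ `|s - d| < 6^-1.
    move=> s Ss.
    have [|d [bd Dd]] := Ddense (ball s 6^-1) _ (ball_open _ _).
      by exists s; rewrite -ball_normE /= subrr normr0 invr_gt0.
    by exists d; split => //; move: bd; rewrite -ball_normE.
  have [f hf] := choice_on id hd.
  exists f; split; first by move=> s /hf [].
  move=> s s' Ss Ss' e; apply: contrapT => neq.
  have := Ssep _ _ Ss Ss' neq 1; rewrite scale1r.
  have [_ h1] := hf _ Ss; have [_ h2] := hf _ Ss'; rewrite -e distrC in h2.
  have := ler_distD (f s) s s'.
  move: h1 h2; set a := `|s - f s|; set b := `|f s - s'|; set c := `|s - s'|.
  move=> h1 h2 h3 h4; exact: arith_key h1 h2 h3 h4.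
have DS : (D #<= S)%card.
  have hN : injs [set: nat] S by apply/injs_card; apply/infiniteP.
  pose Z := [set v : E | exists l : seq (rat * E),
    allS (fun p => S p.2) l /\ v = \sum_(p <- l) ratr p.1 *: p.2].
  have Zd : dense Z.
    move=> W O0 oO; have [v [Ov [l [Sl ev]]]] := M2 W O0 oO.
    have : nbhs v W by apply: open_nbhs_nbhs; split.
    move=> /nbhs_ballP [r /= r0 rO].
    have [l' [Sl' hl']] := approx_rat Ssph Sl r0.
    exists (\sum_(p <- l') ratr p.1 *: p.2); split; last by exists l'.
    by apply: rO; rewrite -ball_normE /= ev.
  have DZ : injs D Z by apply/injs_card; apply: Dmin.
  have ZL : injs Z [set l | allS (fun p : rat * E => S p.2) l].
    have [g hg] := @choice_on _ _ (fun _ => [::]) Z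
      (fun v l => allS (fun p : rat * E => S p.2) l /\ v = \sum_(p <- l) ratr p.1 *: p.2)
      (fun v Zv => Zv).
    exists g; split; first by move=> v /hg [].
    move=> v v' Zv Zv' e.
    by have [_ ->] := hg _ Zv; have [_ ->] := hg _ Zv'; rewrite e.
  have LS := injs_seq hN (injs_ratX hN).
  by apply/injs_card; apply: injs_trans DZ (injs_trans ZL LS).
exists 3^-1; split; first by rewrite invr_gt0.
exists S; split => //; split => //; split; last exact: Ssep.
by apply/card_eqPle.
Qed.
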